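(* Let $W=V/\operatorname{Im}u$, $\zeta:V\to W$ the projection, $W_q=\zeta(\ker u^q)$ for $q\ge0$, and $P=\{g\in GL(W):g(W_q)=W_q\ \forall q\}$. Let $Z(u)=\{g\in GL(V):gu=ug\}$ and let $\varphi:Z(u)\to GL(W)$ be the morphism of algebraic groups sending $g$ to the induced map on $W$ (its image lies in $P$). Then there is a morphism of algebraic groups $\psi:P\to Z(u)$ such that $\varphi\circ\psi=\mathrm{id}_P$.
   Context: $V$ is a finite-dimensional complex vector space and $u:V\to V$ is nilpotent. *)

(* Defs.v *)
From HB Require Import structures.
From mathcomp Require Import all_boot all_order all_algebra all_field.
Set Implicit Arguments. Unset Strict Implicit. Unset Printing Implicit Defensive.
Import GRing.Theory Num.Theory.
Local Open Scope ring_scope.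

(* Row-vector convention: V = 'rV[F]_n, a matrix A : 'M_n acts as v |-> v *m A. *)

Definition nilpotent_mx (F : fieldType) (n : nat) (u : 'M[F]_n) : Prop :=
  exists k : nat, u ^+ k = 0.

(* Regular functions on GL_m (the coordinate ring F[x_ij, det^-1]):
   the smallest class of functions 'M_m -> F containing constants,
   matrix coordinates and 1/det, closed under + and *. *)
Inductive regular_fun (F : fieldType) (m : nat) : ('M[F]_m -> F) -> Prop :=
  | reg_const (c : F) : regular_fun (fun _ => c)
  | reg_coord (i j : 'I_m) : regular_fun (fun A => A i j)
  | reg_invdet : regular_fun (fun A => (\det A)^-1)
  | reg_add f g : regular_fun f -> regular_fun g -> regular_fun (fun A => f A + g A)
  | reg_mul f g : regular_fun f -> regular_fun g -> regular_fun (fun A => f A * g A).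

Definition Wq (F : fieldType) (n m : nat) (u : 'M[F]_n) (zeta : 'M[F]_(n, m)) (q : nat)
  : 'M[F]_(n, m) := (kermx (u ^+ q) *m zeta)%R.

Definition in_P (F : fieldType) (n m : nat) (u : 'M[F]_n) (zeta : 'M[F]_(n, m))
  (g : 'M[F]_m) : Prop :=
  g \in unitmx /\ forall q : nat, (Wq u zeta q *m g == Wq u zeta q)%MS.

Definition in_Zu (F : fieldType) (n : nat) (u : 'M[F]_n) (h : 'M[F]_n) : Prop :=
  h \in unitmx /\ h *m u = u *m h.

(* Main.v *)
Require Import Defs.
From HB Require Import structures.
From mathcomp Require Import all_boot all_order all_algebra all_field.
Import GRing.Theory Num.Theory.
Local Open Scope ring_scope.
Set Implicit Arguments. Unset Strict Implicit.

Section Core.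
Variables (F : fieldType) (n m : nat) (u : 'M[F]_n) (zeta : 'M[F]_(n,m)).
Hypothesis uz : u *m zeta = 0.

Lemma uXz j : u ^+ j.+1 *m zeta = 0.
Proof. by rewrite exprSr -mulmxE -mulmxA uz mulmx0. Qed.

Lemma Wq_mono q1 q2 : (q1 <= q2)%N -> (Wq u zeta q1 <= Wq u zeta q2)%MS.
Proof.
move=> le; rewrite /Wq submxMr // sub_kermx -(subnKC le) exprD -mulmxE mulmxA.
by rewrite mulmx_ker mul0mx.
Qed.

Lemma Wq0 : Wq u zeta 0 = 0.
Proof.
rewrite /Wq expr0.
have /eqP -> : (kermx (1%:M : 'M[F]_n) == 0) by rewrite kermx_eq0 row_free_unit unitmx1.
by rewrite mul0mx.
Qed.

Variable S : 'M[F]_(m,n).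
Hypothesis Sz : S *m zeta = 1%:M.
Hypothesis SW : forall q, Wq u zeta q *m S *m u ^+ q = 0.

Lemma subW0 p (x : 'M[F]_(p,m)) q : (x <= Wq u zeta q)%MS -> x *m S *m u ^+ q = 0.
Proof.
move=> /mulmxKpV <-; move: (Wq u zeta q) (SW q) => W hW.
by rewrite -!mulmxA (mulmxA W) hW !mulmx0.
Qed.

Lemma kerS p N (a : nat -> 'M[F]_(p,m)) t :
  (\sum_(j < N) a j *m S *m u ^+ j) *m u ^+ t = 0 ->
  forall j, (j < N)%N -> (a j <= Wq u zeta (j + t))%MS.
Proof.
elim: N a t => [|N IH] a t; first by [].
rewrite big_ord_recl /= => H.
have b0 : forall i : nat, bump 0 i = i.+1 by move=> i; rewrite /bump leq0n.
rewrite (eq_bigr (fun i : 'I_N => a i.+1 *m S *m u ^+ i.+1)) in H; last by move=> i _; rewrite b0.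
have a0 : (a 0%N <= Wq u zeta t)%MS.
  move: H; set y := (_ + _) => H.
  have /(submxMr zeta) : (y <= kermx (u ^+ t))%MS by apply/sub_kermxP.
  rewrite /y mulmxDl mulmx_suml big1 => [|i _]; last by rewrite -mulmxA uXz mulmx0.
  by rewrite addr0 expr0 mulmx1 -mulmxA Sz mulmx1.
have H2 : (\sum_(i < N) a i.+1 *m S *m u ^+ i) *m u ^+ t.+1 = 0.
  move: H; rewrite mulmxDl expr0 mulmx1 (subW0 a0) add0r !mulmx_suml => H.
  rewrite -[RHS]H; apply: eq_bigr => i _.
  by rewrite -!mulmxA !mulmxE -!exprD addSn addnS.
case=> [_|j]; first by rewrite add0n.
rewrite ltnS => jN; have := IH (fun i => a i.+1) t.+1 H2 j jN.
by rewrite addnS addSn.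
Qed.


Variable N : nat.
Hypothesis uN : u ^+ N = 0.
Hypothesis zS1 : (1%:M - zeta *m S <= u)%MS.

Definition L := (1%:M - zeta *m S) *m pinvmx u.

Lemma LU : L *m u = 1%:M - zeta *m S.
Proof. exact: mulmxKpV. Qed.

Lemma uNS k : u ^+ (N + k) = 0.
Proof. by rewrite exprD uN mul0r. Qed.

Lemma ident t : 1%:M = \sum_(j < t) L ^+ j *m zeta *m S *m u ^+ j + L ^+ t *m u ^+ t.
Proof.
elim: t => [|t IH]; first by rewrite big_ord0 add0r !expr0 mulmx1.
rewrite big_ord_recr /= IH -addrA; congr (_ + _).
rewrite exprSr exprS -!mulmxE (mulmxA (L ^+ t *m L) u) -(mulmxA (L ^+ t) L u) LU.
by rewrite mulmxBr mulmxBl mulmx1 !mulmxA addrC subrK.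
Qed.

Lemma ident' : 1%:M = \sum_(j < N.+1) L ^+ j *m zeta *m S *m u ^+ j.
Proof. by rewrite {1}(ident N.+1) -addn1 uNS mulmx0 addr0. Qed.

Definition psi (g : 'M[F]_m) := \sum_(j < N.+1) L ^+ j *m zeta *m g *m S *m u ^+ j.

Lemma psi1 : psi 1%:M = 1%:M.
Proof. by rewrite /psi ident'; apply: eq_bigr => j _; rewrite mulmx1. Qed.

Definition goodP g := forall q, (Wq u zeta q *m g <= Wq u zeta q)%MS.

Lemma kerP p g (a : nat -> 'M[F]_(p,m)) : goodP g ->
  \sum_(j < N.+1) a j *m S *m u ^+ j = 0 ->
  \sum_(j < N.+1) a j *m g *m S *m u ^+ j = 0.
Proof.
move=> gP H; have := kerS (N:=N.+1) (t:=0) (a := a); rewrite expr0 mulmx1 => /(_ H) aW.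
apply: big1 => j _; apply: subW0.
apply: submx_trans (gP j); apply: submxMr; have := aW j (ltn_ord j).
by rewrite addn0.
Qed.

Lemma repr p g (x : 'M[F]_(p,n)) (a : nat -> 'M[F]_(p,m)) : goodP g ->
  x = \sum_(j < N.+1) a j *m S *m u ^+ j ->
  x *m psi g = \sum_(j < N.+1) a j *m g *m S *m u ^+ j.
Proof.
move=> gP Hx.
have H0 : \sum_(j < N.+1) (a j - x *m L ^+ j *m zeta) *m S *m u ^+ j = 0.
  rewrite (eq_bigr (fun j : 'I_N.+1 => a j *m S *m u ^+ j - x *m (L ^+ j *m zeta *m S *m u ^+ j))); last first.
    by move=> j _; rewrite !mulmxBl !mulmxA.
  by rewrite sumrB -mulmx_sumr -ident' mulmx1 -Hx subrr.
have := @kerP _ g (fun j => a j - x *m L ^+ j *m zeta) gP H0.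
rewrite (eq_bigr (fun j : 'I_N.+1 => a j *m g *m S *m u ^+ j - x *m (L ^+ j *m zeta *m g *m S *m u ^+ j))); last first.
  by move=> j _; rewrite !mulmxBl !mulmxA.
rewrite sumrB -mulmx_sumr => /eqP; rewrite subr_eq0 => /eqP ->.
by [].
Qed.


Lemma psi_zeta g : psi g *m zeta = zeta *m g.
Proof.
rewrite /psi mulmx_suml big_ord_recl big1 => [|i _]; last first.
  by rewrite -mulmxA lift0 uXz mulmx0.
by rewrite addr0 !expr0 mulmx1 mul1mx -mulmxA Sz mulmx1.
Qed.

Lemma psi_mul g1 g2 : goodP g2 -> psi (g1 *m g2) = psi g1 *m psi g2.
Proof.
move=> gP; rewrite (@repr _ g2 (psi g1) (fun j => L ^+ j *m zeta *m g1)) //.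
by apply: eq_bigr => j _; rewrite !mulmxA.
Qed.

Lemma psi_comm g : goodP g -> u *m psi g = psi g *m u.
Proof.
move=> gP.
pose a := fun j : nat => if j is j'.+1 then L ^+ j' *m zeta else 0.
have Hu : u = \sum_(j < N.+1) a j *m S *m u ^+ j.
  rewrite big_ord_recl /= mul0mx mul0mx add0r.
  rewrite -{1}[u]mul1mx ident' mulmx_suml big_ord_recr /=.
  rewrite uN mulmx0 mul0mx addr0.
  by apply: eq_bigr => i _; rewrite add0n /bump leq0n add1n exprSr -mulmxE !mulmxA.
rewrite (repr gP Hu) /psi mulmx_suml big_ord_recl /= !mul0mx add0r.
rewrite big_ord_recr /= uN mulmx0 mul0mx addr0.
by apply: eq_bigr => i _; rewrite add0n /bump leq0n add1n exprSr -mulmxE !mulmxA.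
Qed.

End Core.

Lemma sub0 (F : fieldType) p r k l (x : 'M[F]_(p,k)) (W : 'M[F]_(r,k)) (M : 'M[F]_(k,l)) :
  (x <= W)%MS -> W *m M = 0 -> x *m M = 0.
Proof.
move=> /mulmxKpV <-; move: W => W hW.
by rewrite -mulmxA hW mulmx0.
Qed.

Section Construct.
Variables (F : fieldType) (n m : nat) (u : 'M[F]_n) (zeta : 'M[F]_(n,m)).
Hypothesis zfull : row_full zeta.

Lemma exS Q : exists S : 'M[F]_(m,n), S *m zeta = 1%:M /\
  forall q, (q <= Q)%N -> Wq u zeta q *m S *m u ^+ q = 0.
Proof.
elim: Q => [|Q [S [Sz SW]]].
  exists (pinvmx zeta); split.
    by rewrite -{1}[pinvmx zeta]mul1mx mulmxKpV // sub1mx.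
  by move=> q; rewrite leqn0 => /eqP ->; rewrite Wq0 !mul0mx.
set A := <<Wq u zeta Q>>%MS; set B := <<Wq u zeta Q.+1>>%MS.
set C := (B :\: A)%MS; set E := proj_mx C A.
set T := pinvmx (Wq u zeta Q.+1) *m kermx (u ^+ Q.+1).
have dCA : (C :&: A = 0)%MS by apply: capmx_diff.
have EW : (E <= Wq u zeta Q.+1)%MS.
  rewrite -[E]mul1mx; apply: submx_trans (proj_mx_sub _ _ _) _.
  by apply: submx_trans (diffmxSl _ _) _; rewrite genmxE.
exists ((1%:M - E) *m S + E *m T); split.
  rewrite mulmxDl -(mulmxA _ S) Sz mulmx1 -(mulmxA E T) /T -(mulmxA (pinvmx _)).
  have -> : E *m (pinvmx (Wq u zeta Q.+1) *m (kermx (u ^+ Q.+1) *m zeta)) = E.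
    by rewrite mulmxA; apply: mulmxKpV.
  by rewrite subrK.
move=> q; rewrite leq_eqVlt => /orP [/eqP -> | ].
  rewrite mulmxDr mulmxDl (mulmxA _ E T).
  have T0 : T *m u ^+ Q.+1 = 0 by rewrite /T -mulmxA mulmx_ker mulmx0.
  rewrite -(mulmxA _ T) T0 mulmx0 addr0 mulmxA mulmxBr mulmx1.
  have hx : (Wq u zeta Q.+1 - Wq u zeta Q.+1 *m E <= A)%MS.
    apply: proj_mx_compl_sub.
    apply: submx_trans (_ : (B <= _)%MS); first by rewrite genmxE.
    rewrite -{1}(addsmx_diff_cap_eq B A); apply: addsmxS => //; apply: capmxSr.
  rewrite exprSr -mulmxE mulmxA -(mulmxA _ S) (sub0 (M := S *m u ^+ Q) hx) ?mul0mx //.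
  apply: (sub0 (W := Wq u zeta Q)); first by rewrite genmxE.
  by rewrite mulmxA SW.
rewrite ltnS => qQ.
have hq : (Wq u zeta q <= A)%MS by rewrite genmxE; apply: Wq_mono.
rewrite mulmxDr mulmxDl (mulmxA _ E T) (mulmxA _ (1%:M - E)) mulmxBr mulmx1 (proj_mx_0 dCA hq) !mul0mx addr0 subr0.
exact: SW.
Qed.

End Construct.

From Stdlib Require Import FunctionalExtensionality.

Lemma reg_ext (F : fieldType) m (f g : 'M[F]_m -> F) :
  regular_fun f -> (forall A, f A = g A) -> regular_fun g.
Proof. by move=> rf e; rewrite -(functional_extensionality _ _ e). Qed.

Lemma reg_sum (F : fieldType) m (T : Type) (r : seq T) (P : pred T) (f : T -> 'M[F]_m -> F) :
  (forall i, regular_fun (f i)) -> regular_fun (fun A => \sum_(i <- r | P i) f i A).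
Proof.
move=> rf; elim: r => [|x r IH].
  by apply: (reg_ext (reg_const _ 0)) => A; rewrite big_nil.
case: (boolP (P x)) => Px.
  apply: (reg_ext (reg_add (rf x) IH)) => A; by rewrite big_cons Px.
by apply: (reg_ext IH) => A; rewrite big_cons (negbTE Px).
Qed.

Unset Implicit Arguments. Set Strict Implicit.

Theorem lemma3p6 (F : numClosedFieldType) (n m : nat) (u : 'M[F]_n)
    (zeta : 'M[F]_(n, m)) :
  nilpotent_mx u ->
  row_full zeta ->
  (kermx zeta == u)%MS ->
  exists psi : 'M[F]_m -> 'M[F]_n,
    (forall g, in_P u zeta g -> in_Zu u (psi g)) /\
    (forall g1 g2, in_P u zeta g1 -> in_P u zeta g2 ->
        psi (g1 *m g2) = psi g1 *m psi g2) /\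
    (forall i j : 'I_n, exists f : 'M[F]_m -> F,
        regular_fun f /\ forall g, in_P u zeta g -> psi g i j = f g) /\
    (forall g, in_P u zeta g -> psi g *m zeta = zeta *m g).
Proof.
move=> [k uk] zfull /andP [hk hu].
have uz : u *m zeta = 0 by apply/sub_kermxP.
have [S [Sz SW0]] := exS u zfull k.
have SW : forall q, Wq u zeta q *m S *m u ^+ q = 0.
  move=> q; case: (leqP q k) => [/SW0 //|kq].
  by rewrite -(subnKC (ltnW kq)) exprD uk mul0r mulmx0.
have zS1 : (1%:M - zeta *m S <= u)%MS.
  apply: submx_trans hk; apply/sub_kermxP.
  by rewrite mulmxBl mul1mx -mulmxA Sz mulmx1 subrr.
have gP : forall g, in_P u zeta g -> goodP u zeta g.
  by move=> g [_ h] q; case/andP: (h q).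
have Pinv : forall g, in_P u zeta g -> in_P u zeta (invmx g).
  move=> g [gu h]; split; first by rewrite unitmx_inv.
  move=> q; case/andP: (h q) => h1 h2; apply/andP; split.
    by rewrite -{2}(mulmxK gu (Wq u zeta q)) submxMr.
  by rewrite -{1}(mulmxK gu (Wq u zeta q)) submxMr.
exists (psi u zeta S k); split; [|split; [|split]].
- move=> g Pg; split; last by rewrite (psi_comm uz Sz SW uk zS1 (gP _ Pg)).
  have : psi u zeta S k g *m psi u zeta S k (invmx g) = 1%:M.
    rewrite -(psi_mul uz Sz SW uk zS1); last exact: gP (Pinv _ Pg).
    by case: Pg => gu _; rewrite mulmxV // (psi1 uk zS1).
  by move=> h; exact: (proj1 (mulmx1_unit h)).

- by move=> g1 g2 _ P2; rewrite (psi_mul uz Sz SW uk zS1) //; exact: gP.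
- move=> i j.
  exists (fun g : 'M[F]_m => \sum_(t < k.+1) \sum_(b < m)
     (\sum_(a < m) (L u zeta S ^+ t *m zeta) i a * g a b) * (S *m u ^+ t) b j).
  split.
    apply: reg_sum => t; apply: reg_sum => b.
    apply: (reg_mul (f := fun g => \sum_(a < m) (L u zeta S ^+ t *m zeta) i a * g a b)
                    (g := fun _ => (S *m u ^+ t) b j)); last exact: reg_const.
    apply: reg_sum => a; exact: (reg_mul (reg_const _ _) (reg_coord _ _ _)).
  move=> g _; rewrite /psi summxE; apply: eq_bigr => t _.
  rewrite -mulmxA !mxE; apply: eq_bigr => b _; by rewrite !mxE.
- by move=> g _; rewrite psi_zeta.
Qed.
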